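(* For every integer $n\ge 3$, the polytope $\operatorname{conv}\phi_3$ is affinely isomorphic to a face of the polytope $\operatorname{conv}\phi_n$.
   Context: For $n\ge 3$, $\phi_n$ is the set of $\binom{n}{2}\times\binom{n}{2}$ permutation matrices of the edges of the complete graph $K_n$ induced by permutations of its vertices: for a permutation $\sigma$ of $[n]$, the associated vector $\bm{z}\in\{0,1\}^{\binom{n}{2}\times\binom{n}{2}}$ has coordinates $z_{ijkl}$, $i,j,k,l\in[n]$, $i<j$, $k<l$, with $z_{ijkl}=1$ iff $\{\sigma(i),\sigma(j)\}=\{k,l\}$, and $0$ otherwise. Thus $\phi_n$ has $n!$ elements. *)

(* Defs.v *)
From HB Require Import structures.
From mathcomp Require Import all_boot all_order all_algebra all_fingroup.
Set Implicit Arguments. Unset Strict Implicit. Unset Printing Implicit Defensive.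
Import Order.TTheory GRing.Theory Num.Theory.
Local Open Scope ring_scope.

(* Edges {i,j} of K_n, encoded as pairs (i,j) with i < j. *)
Definition edge (n : nat) : finType := {e : 'I_n * 'I_n | (e.1 < e.2)%N}.

(* Coordinates z_{ijkl} of R^{binom(n,2) x binom(n,2)}: pairs of edges. *)
Definition ecoord (n : nat) : finType := (edge n * edge n)%type.

Definition zperm (R : realFieldType) (n : nat) (s : 'S_n) (c : ecoord n) : R :=
  if [set s (val c.1).1; s (val c.1).2] == [set (val c.2).1; (val c.2).2]
  then 1 else 0.
Arguments zperm R [n] s c.

Definition conv_phi (R : realFieldType) (n : nat) (x : ecoord n -> R) : Prop :=
  exists lam : 'S_n -> R,
    [/\ forall s, 0 <= lam s,
        \sum_(s : 'S_n) lam s = 1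
      & forall c, x c = \sum_(s : 'S_n) lam s * zperm R s c].
Arguments conv_phi R n x : clear implicits.

Definition is_face (R : realFieldType) (T : finType) (P F : (T -> R) -> Prop) : Prop :=
  exists (a : T -> R) (b : R),
    (forall x, P x -> \sum_(c : T) a c * x c <= b) /\
    (forall x, F x <-> (P x /\ \sum_(c : T) a c * x c = b)).

Definition affmap (R : realFieldType) (T1 T2 : finType)
  (M : T2 -> T1 -> R) (b : T2 -> R) (x : T1 -> R) : T2 -> R :=
  fun c => \sum_(d : T1) M c d * x d + b c.

Definition affinely_isomorphic (R : realFieldType) (T1 T2 : finType)
  (P : (T1 -> R) -> Prop) (Q : (T2 -> R) -> Prop) : Prop :=
  exists (M : T2 -> T1 -> R) (b : T2 -> R),
    [/\ forall x y, P x -> P y -> (forall c, affmap M b x c = affmap M b y c) ->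
                    forall d, x d = y d,
        forall x, P x -> Q (affmap M b x)
      & forall y, Q y -> exists x, P x /\ forall c, affmap M b x c = y c].

(* Main.v *)
Require Import Defs.
From HB Require Import structures.
From mathcomp Require Import all_boot all_order all_algebra all_fingroup.
From mathcomp Require Import zify ring lra.
Set Implicit Arguments. Unset Strict Implicit. Unset Printing Implicit Defensive.
Import Order.TTheory GRing.Theory Num.Theory.
Local Open Scope ring_scope.

Definition extf (k : nat) (s : 'S_3) (i : 'I_(3+k)) : 'I_(3+k) :=
  if (i < 3)%N then lshift k (s (inord i)) else i.

Lemma extf_inj k s : injective (@extf k s).
Proof.
move=> i j; rewrite /extf.
case: ifP => hi; case: ifP => hj => /(congr1 val) /= h; apply: val_inj => //=.
- move: h => /val_inj /perm_inj /(congr1 val); rewrite /= !inordK //.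
- have := ltn_ord (s (inord i)); move/negbT: hj; lia.
- have := ltn_ord (s (inord j)); move/negbT: hi; lia.
Qed.

Definition ext k (s : 'S_3) : 'S_(3+k) := perm (@extf_inj k s).

Lemma ext_lo k s (i : 'I_(3+k)) : (i < 3)%N -> ext k s i = lshift k (s (inord i)).
Proof. by move=> hi; rewrite permE /extf hi. Qed.
Lemma ext_hi k s (i : 'I_(3+k)) : (3 <= i)%N -> ext k s i = i.
Proof. by move=> hi; rewrite permE /extf ltnNge hi. Qed.
Lemma ext_lo_lt k s (i : 'I_(3+k)) : (i < 3)%N -> (ext k s i < 3)%N.
Proof. by move=> hi; rewrite ext_lo //=. Qed.
Lemma ext_lshift k s (j : 'I_3) : ext k s (lshift k j) = lshift k (s j).
Proof. rewrite ext_lo //=; congr (lshift k (s _)); apply: val_inj; rewrite /= inordK //. Qed.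

Lemma ext_inj k : injective (ext k).
Proof.
move=> s t h; apply/permP => j; have := congr1 (fun f : 'S_(3+k) => f (lshift k j)) h.
by rewrite /= !ext_lshift => /(congr1 val) /= /val_inj.
Qed.

Definition fixU k (g : 'S_(3+k)) : Prop := forall i : 'I_(3+k), (3 <= i)%N -> g i = i.

Lemma ext_fixU k s : fixU (ext k s).
Proof. by move=> i; apply: ext_hi. Qed.

Lemma fixU_lo k (g : 'S_(3+k)) (i : 'I_(3+k)) : fixU g -> (i < 3)%N -> (g i < 3)%N.
Proof.
move=> hg hi; rewrite ltnNge; apply/negP => h.
have := hg _ h; move/perm_inj => e.
by move: h; rewrite e leqNgt hi.
Qed.

Lemma fixU_ext k (g : 'S_(3+k)) : fixU g -> exists s, g = ext k s.
Proof.
move=> hg.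
pose sf (j : 'I_3) : 'I_3 := inord (g (lshift k j)).
have sfK j : (sf j : nat) = g (lshift k j).
  rewrite /sf inordK //; apply: (@fixU_lo k g (lshift k j)) => //=.
have sf_inj : injective sf.
  move=> a b /(congr1 (@nat_of_ord _)); rewrite !sfK => /val_inj /perm_inj /(congr1 (@nat_of_ord _)) /= /val_inj //.
exists (perm sf_inj); apply/permP => i.
case: (ltnP i 3) => hi.
  rewrite ext_lo //; apply: val_inj; rewrite /= permE sfK /=; congr (val (g _)).
  by apply: val_inj; rewrite /= inordK.
by rewrite ext_hi // hg.
Qed.

Definition inC k (c : ecoord (3+k)) : bool :=
  (3 <= (val c.1).2)%N && ((val c.2).2 != (val c.1).2).

Lemma fixU_vanish (R : realFieldType) k (g : 'S_(3+k)) (c : ecoord (3+k)) : fixU g -> inC c -> zperm R g c = 0.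
Proof.
move: c => [[[e1 e2] /= he] [[f1 f2] /= hf]] hg /andP[/= h3 hne].
rewrite /zperm /=; case: eqP => // hs; exfalso.
have ge2 : g e2 = e2 := hg _ h3.
rewrite ge2 in hs.
have hf2 : f2 \in [set g e1; e2] by rewrite hs !inE eqxx orbT.
have he2 : e2 \in [set f1; f2] by rewrite -hs !inE eqxx orbT.
rewrite !inE in hf2 he2.
case/orP: hf2 => /eqP hf2; last by rewrite hf2 eqxx in hne.
case/orP: he2 => /eqP he2; last by rewrite he2 eqxx in hne.
have h3' : (3 <= g e1)%N by rewrite -hf2; move: hf h3; rewrite -he2; lia.
have /perm_inj ge1 := hg _ h3'.
move: he hf; rewrite he2 hf2 ge1; lia.
Qed.

Lemma mkedge n (u v : 'I_n) : u != v -> exists f : edge n, [set (val f).1; (val f).2] = [set u; v].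
Proof.
move=> huv; case: (ltngtP u v) => h.
- by exists (exist _ (u, v) h).
- by exists (exist _ (v, u) h); rewrite setUC.
- by move: huv; rewrite (val_inj h) eqxx.
Qed.

Lemma vanish_fixU (R : realFieldType) k (g : 'S_(3+k)) :
  (forall c, inC c -> zperm R g c = 0) -> fixU g.
Proof.
move=> hv i hi; apply/eqP; apply/negPn/negP => hne.
have key (u : 'I_(3+k)) : (u < 3)%N -> g u = i.
  move=> hu; have hui : (u < i)%N by lia.
  have hgu : g u != g i by rewrite (inj_eq perm_inj) neq_ltn hui.
  have [f hf] := mkedge hgu.
  pose e : edge (3+k) := exist _ (u, i) hui.
  have hz : zperm R g (e, f) != 0 by rewrite /zperm /= hf eqxx oner_neq0.
  have hf2 : (val f).2 = i.
    apply/eqP; apply: contraR hz => hne2; apply/eqP; apply: hv.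
    by rewrite /inC /= hi.
  have : (val f).2 \in [set (val f).1; (val f).2] by rewrite !inE eqxx orbT.
  rewrite hf hf2 !inE => /orP [/eqP -> //| /eqP hgi].
  by rewrite -hgi eqxx in hne.
have h0 := key (lshift k (@Ordinal 3 0 isT)) isT.
have h1 := key (lshift k (@Ordinal 3 1 isT)) isT.
by move: h0; rewrite -h1 => /perm_inj /(congr1 val).
Qed.

Definition embe k (e : edge 3) : edge (3+k) :=
  exist _ (lshift k (val e).1, lshift k (val e).2) (svalP e).
Definition embc k (d : ecoord 3) : ecoord (3+k) := (embe k d.1, embe k d.2).

Lemma set2_lshift k (x y : 'I_3) : [set lshift k x; lshift k y] = lshift k @: [set x; y].
Proof. by rewrite imsetU1 imset_set1. Qed.

Lemma zperm_embc (R : realFieldType) k s d : zperm R (ext k s) (embc k d) = zperm R s d.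
Proof.
rewrite /zperm /= !ext_lshift !set2_lshift.
by rewrite (inj_eq (imset_inj (@lshift_inj 3 k))).
Qed.

Lemma compl3 (u v w : 'I_3) : u != v -> u != w -> v != w -> [set u; v] = ~: [set w].
Proof.
move=> huv huw hvw; apply/eqP; rewrite eqEcard cardsC1 card_ord cards2 huv andbT.
apply/subsetP => x; rewrite !inE => /orP[/eqP->|/eqP->] //.
Qed.

Lemma cedge (a : 'I_3) : exists e : edge 3, [set (val e).1; (val e).2] = ~: [set a].
Proof.
case: a => [[|[|[|//]]] ha].
- by exists (exist _ (@Ordinal 3 1 isT, @Ordinal 3 2 isT) isT); apply: compl3.
- by exists (exist _ (@Ordinal 3 0 isT, @Ordinal 3 2 isT) isT); apply: compl3.
- by exists (exist _ (@Ordinal 3 0 isT, @Ordinal 3 1 isT) isT); apply: compl3.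
Qed.

Lemma cedge_s (s : 'S_3) (a : 'I_3) (e : edge 3) :
  [set (val e).1; (val e).2] = ~: [set a] ->
  [set s (val e).1; s (val e).2] = ~: [set s a].
Proof.
move=> he.
have h1 : (val e).1 \in ~: [set a] by rewrite -he !inE eqxx.
have h2 : (val e).2 \in ~: [set a] by rewrite -he !inE eqxx orbT.
rewrite !inE in h1 h2.
apply: compl3; rewrite (inj_eq perm_inj) //.
by rewrite neq_ltn (svalP e).
Qed.

Lemma zero_case1 (R : realFieldType) k (g : 'S_(3+k)) (c : ecoord (3+k)) :
  (forall i : 'I_(3+k), (i < 3)%N -> (g i < 3)%N) ->
  ((val c.1).2 < 3)%N -> (3 <= (val c.2).2)%N -> zperm R g c = 0.
Proof.
move: c => [[[a b] /= hab] [[p q] /= hpq]] hg hb hq.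
rewrite /zperm /=; case: eqP => // H; exfalso.
have : q \in [set g a; g b] by rewrite H !inE eqxx orbT.
rewrite !inE => /orP[]/eqP/(congr1 (@nat_of_ord _)) E.
- have := hg a (ltn_trans hab hb); lia.
- have := hg b hb; lia.
Qed.

Lemma zero_case2 (R : realFieldType) k (g : 'S_(3+k)) (c : ecoord (3+k)) :
  (g (val c.1).1 < 3)%N -> g (val c.1).2 = (val c.1).2 -> (3 <= (val c.1).2)%N ->
  ~~ (((val c.2).2 == (val c.1).2) && ((val c.2).1 < 3)%N) -> zperm R g c = 0.
Proof.
move: c => [[[a b] /= hab] [[p q] /= hpq]] hga hgb hb E.
rewrite /zperm /= hgb; case: eqP => // H; exfalso.
have m1 : q \in [set g a; b] by rewrite H !inE eqxx orbT.
have m2 : p \in [set g a; b] by rewrite H !inE eqxx.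
have m3 : b \in [set p; q] by rewrite -H !inE eqxx orbT.
rewrite !inE in m1 m2 m3.
move: E; rewrite negb_and -leqNgt => /orP[hqb|hp].
- have hqb' : (q : nat) <> b by move=> /val_inj/eqP; rewrite (negbTE hqb).
  move: m1 m2 m3 => /orP[]/eqP/(congr1 (@nat_of_ord _)) m1 /orP[]/eqP/(congr1 (@nat_of_ord _)) m2
    /orP[]/eqP/(congr1 (@nat_of_ord _)) m3; lia.
- move: m1 m2 m3 => /orP[]/eqP/(congr1 (@nat_of_ord _)) m1 /orP[]/eqP/(congr1 (@nat_of_ord _)) m2
    /orP[]/eqP/(congr1 (@nat_of_ord _)) m3; lia.
Qed.

Lemma key (R : realFieldType) k (c : ecoord (3+k)) :
  (exists d, forall s, zperm R (ext k s) c = zperm R s d) \/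
  (forall s, zperm R (ext k s) c = zperm R (ext k 1) c).
Proof.
case: (ltnP (val c.1).2 3) => hb.
  case: (ltnP (val c.2).2 3) => hq.
    left.
    move: c hb hq => [[[a b] /= hab] [[p q] /= hpq]] hb hq.
    have ha : (a < 3)%N by lia.
    have hp : (p < 3)%N by lia.
    have hab' : ((inord a : 'I_3) < (inord b : 'I_3))%N by rewrite !inordK.
    have hpq' : ((inord p : 'I_3) < (inord q : 'I_3))%N by rewrite !inordK.
    exists (exist _ (inord a, inord b) hab', exist _ (inord p, inord q) hpq') => s.
    rewrite -(zperm_embc R k) /embc /embe /=; congr (zperm R _ (_, _)); apply: val_inj => /=;
      congr pair; apply: val_inj; rewrite /= inordK //.
  right => s; rewrite !zero_case1 // => i hi; exact: ext_lo_lt.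
case: (ltnP (val c.1).1 3) => ha; last first.
  right => s; rewrite /zperm !ext_hi //; move: (svalP c.1) => /=; lia.
case E: (((val c.2).2 == (val c.1).2) && ((val c.2).1 < 3)%N); last first.
  right => s; rewrite !zero_case2 ?E ?(@ext_hi _ _ _ hb) ?ext_lo_lt //.
left.
move: c hb ha E => [[[a b] /= hab] [[p q] /= hpq]] /= hb ha /andP[/eqP hqb hp].
have [ea hea] := cedge (inord a).
have [ep hep] := cedge (inord p).
exists (ea, ep) => s.
rewrite /zperm /= (cedge_s s hea) hep.
rewrite (inj_eq (@setC_inj _)) (inj_eq (@set1_inj _)).
rewrite (ext_hi s hb) hqb ext_lo //.
congr (if _ then _ else _).
apply/eqP/eqP => [H | ->].
  have : lshift k (s (inord a)) \in [set p; b] by rewrite -H !inE eqxx.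
  rewrite !inE => /orP [/eqP H1 | /eqP H1].
    apply: val_inj; move/(congr1 (@nat_of_ord _)): H1 => /= ->; rewrite inordK //.
  exfalso; move/(congr1 (@nat_of_ord _)): H1 => /=; have := ltn_ord (s (inord a)); lia.
congr [set _; _]; apply: val_inj; rewrite /= inordK //.
Qed.

Definition gd (R : realFieldType) k (c : ecoord (3+k)) : option (ecoord 3) :=
  [pick d | [forall s : 'S_3, zperm R (ext k s) c == zperm R s d]].
Arguments gd R k c : clear implicits.
Definition Mm (R : realFieldType) k (c : ecoord (3+k)) (d : ecoord 3) : R :=
  (gd R k c == Some d)%:R.
Arguments Mm R k c d : clear implicits.
Definition bb (R : realFieldType) k (c : ecoord (3+k)) : R :=
  if gd R k c is None then zperm R (ext k 1) c else 0.
Arguments bb R k c : clear implicits.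

Lemma AV (R : realFieldType) k (lam : 'S_3 -> R) (x : ecoord 3 -> R) :
  \sum_s lam s = 1 -> (forall d, x d = \sum_s lam s * zperm R s d) ->
  forall c, affmap (Mm R k) (bb R k) x c = \sum_s lam s * zperm R (ext k s) c.
Proof.
move=> h1 hx c; rewrite /affmap /Mm /bb /gd.
case: pickP => [d0 /forallP hd0 | hnone] /=.
  rewrite (bigD1 d0) //= eqxx mul1r big1 ?addr0 => [|d hd]; last first.
    have -> : (Some d0 == Some d) = false by apply/eqP => -[E]; rewrite E eqxx in hd.
    by rewrite mul0r.
  by rewrite hx; apply: eq_bigr => s _; rewrite (eqP (hd0 s)).
rewrite big1 ?add0r => [|d _]; last by rewrite mul0r.
case: (key R c) => [[d hd]|hc].
  by move: (hnone d) => /forallP []; move=> s; rewrite hd.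
by rewrite (eq_bigr (fun s => lam s * zperm R (ext k 1) c)) => [|s _]; rewrite ?hc // -mulr_suml h1 mul1r.
Qed.

Lemma zperm_ge0 (R : realFieldType) n (g : 'S_n) c : 0 <= zperm R g c.
Proof. by rewrite /zperm; case: ifP. Qed.

Lemma RE (R : realFieldType) k (lam : 'S_3 -> R) (f : 'S_(3+k) -> R) :
  \sum_g (\sum_s (ext k s == g)%:R * lam s) * f g = \sum_s lam s * f (ext k s).
Proof.
under eq_bigr do rewrite mulr_suml.
rewrite exchange_big; apply: eq_bigr => s _.
rewrite (bigD1 (ext k s)) //= eqxx mul1r big1 ?addr0 // => g hg.
by rewrite eq_sym (negbTE hg) !mul0r.
Qed.

Lemma RI (R : realFieldType) k (f : 'S_(3+k) -> R) :
  (forall g, ~ fixU g -> f g = 0) -> \sum_g f g = \sum_s f (ext k s).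
Proof.
move=> hf.
rewrite (bigID (fun g => g \in [set ext k s | s in [set: 'S_3]])) /=.
rewrite [X in _ + X]big1 ?addr0 => [|g hg]; last first.
  apply: hf => /fixU_ext [s hs]; move: hg; by rewrite hs imset_f ?inE.
rewrite big_imset /=; last by move=> ? ? _ _; exact: ext_inj.
by apply: eq_bigl => s; rewrite inE.
Qed.

Theorem lemma1 (R : realFieldType) (n : nat) : (3 <= n)%N ->
  exists F : (ecoord n%N -> R) -> Prop,
    is_face (conv_phi R n%N) F /\ affinely_isomorphic (conv_phi R 3%N) F.
Proof.
move=> hn; have [k hk] : exists k, n = 3 + k by exists (n - 3)%N; lia.
subst n.
pose a : ecoord (3+k) -> R := fun c => - (inC c)%:R.
exists (fun y => conv_phi R (3+k) y /\ \sum_c a c * y c = 0); split.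
  exists a, 0; split; last by move=> x; split.
  move=> x [lam [h0 h1 hx]].
  rewrite /a (eq_bigr (fun c => - ((inC c)%:R * x c))) => [|c _]; last by rewrite mulNr.
  rewrite sumrN oppr_le0; apply: sumr_ge0 => c _; apply: mulr_ge0 => //.
  by rewrite hx; apply: sumr_ge0 => g _; apply: mulr_ge0 => //; apply: zperm_ge0.
exists (Mm R k), (bb R k); split.
- move=> x y [lx [lx0 lx1 hx]] [ly [ly0 ly1 hy]] hxy d.
  have := hxy (embc k d); rewrite (AV lx1 hx) (AV ly1 hy) hx hy.
  by under eq_bigr do rewrite zperm_embc; under [X in _ = X -> _]eq_bigr do rewrite zperm_embc.
- move=> x [lam [h0 h1 hx]]; split.
    exists (fun g => \sum_s (ext k s == g)%:R * lam s); split.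
    + by move=> g; apply: sumr_ge0 => s _; apply: mulr_ge0.
    + transitivity (\sum_s lam s * 1); last by under eq_bigr do rewrite mulr1.
      rewrite -(@RE R k lam (fun _ => 1)); apply: eq_bigr => g _; by rewrite mulr1.
    + by move=> c; rewrite (AV h1 hx) RE.
  apply: big1 => c _; rewrite (AV h1 hx) /a.
  case hc: (inC c); last by rewrite oppr0 mul0r.
  rewrite big1 ?mulr0 // => s _; rewrite fixU_vanish ?mulr0 //; exact: ext_fixU.
- move=> y [[mu [h0 h1 hy]] hsum].
  have hyc : forall c, inC c -> y c = 0.
    have hs : \sum_c (inC c)%:R * y c = 0.
      apply/eqP; rewrite -oppr_eq0 -sumrN -(eqP (eqxx 0)); apply/eqP; rewrite -[RHS]hsum.
      by apply: eq_bigr => c _; rewrite /a mulNr.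
    move=> c hc.
    have hF : forall c', true -> 0 <= (inC c')%:R * y c'.
      move=> c' _; apply: mulr_ge0 => //; rewrite hy.
      by apply: sumr_ge0 => g _; apply: mulr_ge0 => //; apply: zperm_ge0.
    by have := @psumr_eq0P _ _ _ _ hF hs c isT; rewrite hc mul1r.
  have hz : forall g, ~ fixU g -> mu g = 0.
    move=> g hg; case: (eqVneq (mu g) 0) => // hne; exfalso; apply: hg.
    apply: (@vanish_fixU R) => c hc.
    have hs := hyc c hc; rewrite hy in hs.
    have hF : forall g', true -> 0 <= mu g' * zperm R g' c.
      by move=> g' _; apply: mulr_ge0 => //; apply: zperm_ge0.
    have /eqP := @psumr_eq0P _ _ _ _ hF hs g isT.
    by rewrite mulf_eq0 (negbTE hne) => /eqP.
  pose lam s := mu (ext k s).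
  have hl1 : \sum_s lam s = 1 by rewrite -h1 (RI hz).
  exists (fun d => \sum_s lam s * zperm R s d); split.
    by exists lam; split => // s; exact: h0.
  move=> c; rewrite (@AV R k lam (fun d => \sum_s lam s * zperm R s d) hl1 (fun d => erefl)) hy (@RI R k (fun g => mu g * zperm R g c)) //.
  by move=> g hg; rewrite hz ?mul0r.
Qed.
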